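(* Let $m\le n$ be positive integers, $\gamma,\tau,\delta>0$ with $\eta=\sqrt{\tau+\gamma}<1/2$, and let $\mathbf{A}$ be a random variable valued in $\mathbb{F}_2^{m\times n}$ with $H_\infty(\mathbf{A})\ge(1-\gamma)mn$. Then $$\Pr[\mathbf{A}\text{ is }(\tau,\delta)\text{-bad}]\le m\cdot 2^{-\tau n}+m\cdot\delta\cdot 2^{h(\eta)m}.$$
   Context: $h$ is the binary entropy function, $H_\infty(X)=-\log_2\max_x\Pr[X=x]$. For a matrix $A$, $A_i$ is its $i$-th row, $A_{[i]}$ its first $i$ rows. $p_i(A)=\Pr[\mathbf{A}_i=A_i\mid\mathbf{A}_{[i-1]}=A_{[i-1]}]$, $q_i(A)=-\log_2p_i(A)$; $A$ is $\tau$-rare if $p_i(A)<2^{-n(1+\tau)}$ for some $i$. Fix a function $B$ on $\mathrm{supp}(\mathbf{A})$: if $A$ is $\tau$-rare then $B(A)=\bot$; otherwise $B(A)$ is a (fixed choice of) subset $S\subseteq[m]$ with $|S|\le\eta m$ and $q_i(A)\ge(1-\eta)n$ for all $i\notin S$ (such $S$ exists). $A\in\mathrm{supp}(\mathbf{A})$ is $(\tau,\delta)$-bad if $A$ is $\tau$-rare, or there is $i\in[m]$ with $\Pr[B(\mathbf{A})=B(A)\mid\mathbf{A}_{[i-1]}=A_{[i-1]}]<\delta$. *)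

(* Defs.v *)
From mathcomp Require Import all_boot all_algebra.
From Stdlib Require Import Reals.
Set Implicit Arguments. Unset Strict Implicit. Unset Printing Implicit Defensive.

Local Open Scope R_scope.

Definition Rltb (x y : R) : bool := if Rlt_dec x y then true else false.

Definition log2 (x : R) : R := ln x / ln 2.

Definition h (p : R) : R := - p * log2 p - (1 - p) * log2 (1 - p).

Section Prob.
Variables m n : nat.
Notation mat := 'M['F_2]_(m, n).

(* A random variable valued in F_2^{m x n} is given by its probability mass function *)
Definition is_distr (P : mat -> R) : Prop :=
  (forall A, 0 <= P A) /\ \big[Rplus/0]_(A : mat) P A = 1.

Definition Pr (P : mat -> R) (E : pred mat) : R := \big[Rplus/0]_(A : mat | E A) P A.

Definition condPr (P : mat -> R) (E F : pred mat) : R :=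
  Pr P (predI E F) / Pr P F.

Definition Hinf (P : mat -> R) : R := - log2 (\big[Rmax/0]_(A : mat) P A).

Definition in_supp (P : mat -> R) (A : mat) : bool := Rltb 0 (P A).

(* A'_{[i-1]} = A_{[i-1]} for (0-indexed) row i : rows j < i agree *)
Definition prefix_eq (i : nat) (A A' : mat) : bool :=
  [forall j : 'I_m, (ltn j i ==> (row j A' == row j A))%B].

Definition p_i (P : mat -> R) (A : mat) (i : 'I_m) : R :=
  condPr P (fun A' => row i A' == row i A) (prefix_eq i A).

Definition q_i (P : mat -> R) (A : mat) (i : 'I_m) : R := - log2 (p_i P A i).

Definition rare (P : mat -> R) (tau : R) (A : mat) : bool :=
  [exists i : 'I_m, Rltb (p_i P A i) (Rpower 2 (- (INR n * (1 + tau))))].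

Definition B_spec (P : mat -> R) (tau eta : R) (B : mat -> option {set 'I_m}) : Prop :=
  forall A, in_supp P A ->
    (rare P tau A -> B A = None) /\
    (~~ rare P tau A ->
       exists S : {set 'I_m}, B A = Some S /\ INR #|S| <= eta * INR m /\
         forall i : 'I_m, i \notin S -> (1 - eta) * INR n <= q_i P A i).

Definition bad (P : mat -> R) (tau delta : R) (B : mat -> option {set 'I_m}) (A : mat) : bool :=
  rare P tau A ||
  [exists i : 'I_m,
     Rltb (condPr P (fun A' => B A' == B A) (prefix_eq i A)) delta].

End Prob.

(* Main.v *)
Require Import Defs.
From mathcomp Require Import all_boot all_algebra.
From Stdlib Require Import Reals.
From HB Require Import structures.
From Stdlib Require Import Lra.
Local Open Scope R_scope.

Lemma RplusA' : associative Rplus. Proof. move=> *; ring. Qed.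
Lemma RmultA' : associative Rmult. Proof. move=> *; ring. Qed.
HB.instance Definition _ := Monoid.isComLaw.Build R 0 Rplus RplusA' Rplus_comm Rplus_0_l.
HB.instance Definition _ := Monoid.isComLaw.Build R 1 Rmult RmultA' Rmult_comm Rmult_1_l.
HB.instance Definition _ := Monoid.isMulLaw.Build R 0 Rmult Rmult_0_l Rmult_0_r.
HB.instance Definition _ := Monoid.isAddLaw.Build R Rmult Rplus Rmult_plus_distr_r Rmult_plus_distr_l.

Lemma sumR_le (I : Type) (r : seq I) (Pr : pred I) (F G : I -> R) :
  (forall i, Pr i -> F i <= G i) ->
  \big[Rplus/0]_(i <- r | Pr i) F i <= \big[Rplus/0]_(i <- r | Pr i) G i.
Proof. move=> H; apply: (big_ind2 (fun x y => x <= y)) => //; [lra| intros; lra]. Qed.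

Lemma sumR_ge0 (I : Type) (r : seq I) (Pr : pred I) (F : I -> R) :
  (forall i, Pr i -> 0 <= F i) -> 0 <= \big[Rplus/0]_(i <- r | Pr i) F i.
Proof. move=> H; apply: (big_ind (fun x => 0 <= x)) => //; [lra| intros; lra]. Qed.

Lemma sumR_const (I : Type) (r : seq I) (c : R) :
  \big[Rplus/0]_(i <- r) c = INR (size r) * c.
Proof.
elim: r => [|x r IH]; first by rewrite big_nil /=; ring.
rewrite big_cons IH; change (size (x :: r)) with (S (size r)); rewrite S_INR; ring.
Qed.

Lemma Rinv_ge0' x : 0 <= x -> 0 <= / x.
Proof.
move=> H; case: (Req_dec x 0) => [->|Hx]; first by rewrite Rinv_0; lra.
apply: Rlt_le; apply: Rinv_0_lt_compat; lra.
Qed.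

Lemma sumR_sub (I : finType) (E Q : pred I) (F : I -> R) :
  (forall i, E i -> Q i) -> (forall i, Q i -> 0 <= F i) ->
  \big[Rplus/0]_(i | E i) F i <= \big[Rplus/0]_(i | Q i) F i.
Proof.
move=> HEQ H0; rewrite (big_mkcond E) (big_mkcond Q); apply: sumR_le => i _.
case HE: (E i); first by rewrite (HEQ _ HE); lra.
case HQ: (Q i); [exact: H0 | lra].
Qed.

Section Key.
Variables (T : finType) (V : eqType) (P : T -> R) (r : rel T) (g : T -> V).
Hypothesis P0 : forall x, 0 <= P x.
Hypothesis rr : forall x, r x x.
Hypothesis rs : forall x y, r x y = r y x.
Hypothesis rt : forall x y z, r x y -> r y z -> r x z.

Definition DD A := \big[Rplus/0]_(A' | r A A') P A'.
Definition NN A := \big[Rplus/0]_(A' | (g A' == g A) && r A A') P A'.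

Lemma NN_ge x : P x <= NN x.
Proof.
rewrite /NN (bigD1 x) /=; last by rewrite eqxx rr.
have := @sumR_ge0 _ (index_enum T) (fun A' => ((g A' == g x) && r x A') && (A' != x)) P (fun i _ => P0 i).
lra.
Qed.

Lemma DD_ge0 x : 0 <= DD x.
Proof. exact: sumR_ge0. Qed.

Lemma NN_ge0 x : 0 <= NN x.
Proof. exact: sumR_ge0. Qed.

Lemma per_v (v : V) :
  \big[Rplus/0]_(A | g A == v) (P A * DD A / NN A) <= \big[Rplus/0]_A P A.
Proof.
pose t A A' := if (g A == v) && r A A' then P A * P A' / NN A else 0.
have -> : \big[Rplus/0]_(A | g A == v) (P A * DD A / NN A)
   = \big[Rplus/0]_A \big[Rplus/0]_A' t A A'.
  rewrite big_mkcond; apply: eq_bigr => A _.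
  rewrite /t; case: (g A == v) => /=; last first.
    by rewrite big1.
  rewrite /DD /Rdiv Rmult_assoc (Rmult_comm _ (/ _)) -Rmult_assoc big_distrr.
  rewrite big_mkcond; apply: eq_bigr => A' _.
  by case: (r A A'); rewrite /=; ring.
rewrite exchange_big; apply: sumR_le => A' _.
pose M := \big[Rplus/0]_(A'' | (g A'' == v) && r A' A'') P A''.
have -> : \big[Rplus/0]_A t A A' = M * (P A' / M).
  rewrite /M big_distrl [RHS]big_mkcond /=; apply: eq_bigr => A _.
  rewrite /t; case Hg: (g A == v); last by rewrite /=; ring.
  rewrite rs; case HA: (r A' A); rewrite /=; last by ring.
  rewrite /NN (eqP Hg).
  have -> : \big[Rplus/0]_(A'0 | (g A'0 == v) && r A A'0) P A'0 = M.
    apply: eq_bigl => z; case: (g z == v) => //=.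
    apply/idP/idP => H; [apply: rt HA H | apply: rt _ H; by rewrite rs].
  rewrite -/M /Rdiv; ring.
have HM : 0 <= M by apply: sumR_ge0.
case: (Req_dec M 0) => [->|HM0]; first by rewrite Rmult_0_l; apply: P0.
right; field; exact HM0.
Qed.

Lemma key (Q : pred T) (vs : seq V) (c : R) :
  0 < c -> (forall A, Q A -> 0 < P A) -> (forall A, Q A -> g A \in vs) ->
  \big[Rplus/0]_(A | Q A && Rltb (NN A / DD A) c) P A
    <= c * INR (size vs) * \big[Rplus/0]_A P A.
Proof.
move=> Hc HQP HQg.
pose f A := P A * DD A / NN A.
have f0 : forall A, 0 <= f A.
  move=> A; rewrite /f /Rdiv; apply: Rmult_le_pos; last exact: Rinv_ge0' (NN_ge0 A).
  apply: Rmult_le_pos; [exact: P0 | exact: DD_ge0].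
apply: Rle_trans (_ : \big[Rplus/0]_(A | Q A && Rltb (NN A / DD A) c) (c * f A) <= _).
  apply: sumR_le => A /andP [HQ Hlt].
  move: Hlt; rewrite /Rltb; case: Rlt_dec => // Hlt _.
  have HP := HQP A HQ; have HN := NN_ge A.
  have HND : NN A <= DD A.
    rewrite /NN /DD; apply: sumR_sub => [z /andP [] //|z _]; exact: P0.
  have HN0 : 0 < NN A by lra.
  have HD0 : 0 < DD A by lra.
  have H1 : NN A < c * DD A.
    have := Rmult_lt_compat_r (DD A) _ _ HD0 Hlt.
    by rewrite /Rdiv Rmult_assoc Rinv_l; [rewrite Rmult_1_r | lra].
  rewrite /f.
  have -> : c * (P A * DD A / NN A) = P A * ((c * DD A) / NN A) by rewrite /Rdiv; ring.
  have H2 : 1 < c * DD A / NN A.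
    apply: (Rmult_lt_reg_r (NN A)) => //.
    rewrite /Rdiv Rmult_assoc Rinv_l; lra.
  nra.
rewrite -big_distrr /= Rmult_assoc; apply: Rmult_le_compat_l; first lra.
apply: Rle_trans (_ : \big[Rplus/0]_(A | Q A) f A <= _).
  by apply: sumR_sub => [A /andP [] //|A _]; apply: f0.
apply: Rle_trans (_ : \big[Rplus/0]_(v <- vs) \big[Rplus/0]_(A | g A == v) f A <= _).
  have -> : \big[Rplus/0]_(v <- vs) \big[Rplus/0]_(A | g A == v) f A
      = \big[Rplus/0]_A \big[Rplus/0]_(v <- vs) (if g A == v then f A else 0).
    rewrite exchange_big /=; apply: eq_bigr => v _; by rewrite big_mkcond.
  rewrite big_mkcond; apply: sumR_le => A _.
  case HQ: (Q A); last by apply: sumR_ge0 => v _; case: (g A == v); [apply: f0|lra].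
  rewrite (big_rem (g A)) /=; last exact: HQg.
  rewrite eqxx.
  have : 0 <= \big[Rplus/0]_(v <- rem (g A) vs) (if g A == v then f A else 0).
    by apply: sumR_ge0 => v _; case: ifP => _; [apply: f0|lra].
  lra.
rewrite -sumR_const; apply: sumR_le => v _; exact: per_v.
Qed.

End Key.

Lemma INR_expn2 k : INR (expn 2 k) = 2 ^ k.
Proof.
elim: k => [|k IH]; first by rewrite /=.
by rewrite expnS mult_INR IH /=.
Qed.

Lemma iter_mult (a : R) k : iter k (Rmult a) 1 = a ^ k.
Proof. by elim: k => //= k ->. Qed.

Lemma prod_set (m : nat) (a b : R) (s : {set 'I_m}) :
  \big[Rmult/1]_(i : 'I_m) (if i \in s then a else b) = a ^ #|s| * b ^ (m - #|s|).
Proof.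
rewrite (bigID (fun i => i \in s)) /=.
rewrite (eq_bigr (fun _ => a)); last by move=> i ->.
rewrite [X in _ * X = _](eq_bigr (fun _ => b)); last by move=> i /negbTE ->.
rewrite !big_const !iter_mult.
congr (_ * b ^ _).
have Hc : (#|s| + #|[predC s]|)%nat = m by rewrite -[RHS](card_ord m) cardC.
have -> : #|(fun i => i \notin s)| = #|[predC s]| by apply: eq_card.
move: Hc; move: (#|[predC s]|) (#|s|) => k j <-; by rewrite addKn.
Qed.

Lemma sum_sets (m : nat) (a b : R) :
  \big[Rplus/0]_(s : {set 'I_m}) (a ^ #|s| * b ^ (m - #|s|)) = (a + b) ^ m.
Proof.
rewrite -(eq_bigr _ (fun s _ => @prod_set m a b s)).
have -> : (a + b) ^ m = \big[Rmult/1]_(i : 'I_m) \big[Rplus/0]_(j : bool) (if j then a else b).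
  rewrite (eq_bigr (fun _ => a + b)); last by move=> i _; rewrite big_bool.
  by rewrite big_const_ord iter_mult.
rewrite bigA_distr_bigA /=.
rewrite (reindex (fun s : {set 'I_m} => [ffun i => i \in s])) /=.
  by apply: eq_bigr => s _; apply: eq_bigr => i _; rewrite ffunE.
apply: onW_bij; exists (fun f : {ffun 'I_m -> bool} => [set i | f i]).
  by move=> s; apply/setP => i; rewrite inE ffunE.
by move=> f; apply/ffunP => i; rewrite ffunE inE.
Qed.

Definition Rleb (x y : R) : bool := if Rle_dec x y then true else false.

Lemma count_bound (m : nat) (eta : R) : 0 < eta < 1/2 ->
  INR #|[pred s : {set 'I_m} | Rleb (INR #|s|) (eta * INR m)]| <= Rpower 2 (h eta * INR m).
Proof.
move=> [He0 He1].
have Ha : 0 < eta by [].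
have Hb : 0 < 1 - eta by lra.
have Hab : ln eta < ln (1 - eta) by apply: ln_increasing => //; lra.
pose w := exp (INR m * (eta * ln eta + (1 - eta) * ln (1 - eta))).
have Hw : 0 < w by apply: exp_pos.
have HB : forall s : {set 'I_m}, Rleb (INR #|s|) (eta * INR m) -> w <= eta ^ #|s| * (1 - eta) ^ (m - #|s|).
  move=> s; rewrite /Rleb; case: Rle_dec => // Hk _.
  have Hkm : (#|s| <= m)%nat by rewrite -[X in (_ <= X)%nat](card_ord m) max_card.
  rewrite -!Rpower_pow // /Rpower -exp_plus.
  have -> : INR (m - #|s|) = INR m - INR #|s|.
    have := f_equal INR (subnK Hkm); rewrite plus_INR; lra.
  have : INR m * (eta * ln eta + (1 - eta) * ln (1 - eta)) <= INR #|s| * ln eta + (INR m - INR #|s|) * ln (1 - eta).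
    have : 0 <= (eta * INR m - INR #|s|) * (ln (1 - eta) - ln eta).
      apply: Rmult_le_pos; lra.
    nra.
  case=> H; [left; exact: exp_increasing | by rewrite /w H; right].
have H1 : INR #|[pred s : {set 'I_m} | Rleb (INR #|s|) (eta * INR m)]| * w <= 1.
  apply: (@Rle_trans _ ((eta + (1 - eta)) ^ m)); last first.
    by right; rewrite (_ : eta + (1 - eta) = 1) ?pow1 //; ring.
  rewrite -sum_sets.
  apply: Rle_trans (_ : \big[Rplus/0]_(s : {set 'I_m} | Rleb (INR #|s|) (eta * INR m)) w <= _).
    rewrite big_const.
    elim: #|_| => [|k IH]; first by rewrite /=; lra.
    rewrite S_INR iterS; lra.
  apply: Rle_trans (_ : \big[Rplus/0]_(s : {set 'I_m} | Rleb (INR #|s|) (eta * INR m)) (eta ^ #|s| * (1 - eta) ^ (m - #|s|)) <= _).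
    by apply: sumR_le.
  apply: sumR_sub => // s _.
  apply: Rmult_le_pos; apply: pow_le; lra.
have Hl2 : 0 < ln 2 by rewrite -ln_1; apply: ln_increasing; lra.
have -> : Rpower 2 (h eta * INR m) = / w.
  rewrite /Rpower /w -exp_Ropp; congr exp.
  rewrite /h /log2; field; lra.
apply: (Rmult_le_reg_r w) => //.
rewrite Rinv_l; lra.
Qed.

Lemma sumR_const_ord m c : \big[Rplus/0]_(i < m) c = INR m * c.
Proof.
rewrite big_const_ord; elim: m => [|k IH]; first by rewrite /=; ring.
by rewrite iterS IH S_INR; ring.
Qed.

Section Main.
Variables (m n : nat) (P : 'M['F_2]_(m, n) -> R).
Hypothesis P0 : forall A, 0 <= P A.

Lemma Pr_le_or (E E1 E2 : pred 'M['F_2]_(m, n)) :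
  (forall A, E A -> E1 A || E2 A) -> Pr P E <= Pr P E1 + Pr P E2.
Proof.
move=> H; rewrite /Pr (big_mkcond E) (big_mkcond E1) (big_mkcond E2) -big_split /=.
apply: sumR_le => A _.
have := P0 A.
case HE: (E A); last by case: (E1 A); case: (E2 A); lra.
by move: (H A HE); case: (E1 A); case: (E2 A) => //=; lra.
Qed.

Lemma Pr_exists (F : 'I_m -> pred 'M['F_2]_(m, n)) :
  Pr P (fun A => [exists i, F i A]) <= \big[Rplus/0]_(i < m) Pr P (F i).
Proof.
rewrite /Pr [X in _ <= X](eq_bigr (fun i => \big[Rplus/0]_A (if F i A then P A else 0))); last by move=> i _; rewrite big_mkcond.
rewrite exchange_big /= big_mkcond; apply: sumR_le => A _.
case: (@existsP _ (fun i => F i A)) => [[i Hi]|_]; last by apply: sumR_ge0 => i _; case: (F i A); [apply: P0|lra].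
rewrite (bigD1 i) //= Hi.
rewrite -[X in X <= _]Rplus_0_r; apply: Rplus_le_compat_l.
by apply: sumR_ge0 => j _; case: (F j A); [apply: P0|lra].
Qed.

Lemma pfx_refl i (A : 'M['F_2]_(m, n)) : prefix_eq i A A.
Proof. by apply/forallP => j; apply/implyP. Qed.

Lemma pfx_sym i (A A' : 'M['F_2]_(m, n)) : prefix_eq i A A' = prefix_eq i A' A.
Proof.
apply/forallP/forallP => H j; apply/implyP => Hj; have := implyP (H j) Hj;
  by rewrite eq_sym.
Qed.

Lemma pfx_trans i (A1 A2 A3 : 'M['F_2]_(m, n)) : prefix_eq i A1 A2 -> prefix_eq i A2 A3 -> prefix_eq i A1 A3.
Proof.
move=> /forallP H1 /forallP H2; apply/forallP => j; apply/implyP => Hj.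
by rewrite (eqP (implyP (H2 j) Hj)) (eqP (implyP (H1 j) Hj)).
Qed.

End Main.

Theorem lemmaG7 (m n : nat) (gamma tau delta : R)
  (P : 'M['F_2]_(m, n) -> R) (B : 'M['F_2]_(m, n) -> option {set 'I_m}) :
  (0 < m)%coq_nat -> (m <= n)%coq_nat ->
  0 < gamma -> 0 < tau -> 0 < delta ->
  sqrt (tau + gamma) < 1 / 2 ->
  is_distr P ->
  (1 - gamma) * INR m * INR n <= Hinf P ->
  B_spec P tau (sqrt (tau + gamma)) B ->
  Pr P (fun A => in_supp P A && bad P tau delta B A)
    <= INR m * Rpower 2 (- tau * INR n)
       + INR m * delta * Rpower 2 (h (sqrt (tau + gamma)) * INR m).
Proof.
move=> Hm Hmn Hg Ht Hd Heta [P0 P1] _ HB.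
set eta := sqrt (tau + gamma) in Heta HB *.
have Heta0 : 0 < eta by apply: sqrt_lt_R0; lra.
set c := Rpower 2 (- (INR n * (1 + tau))).
have Hc : 0 < c by apply: exp_pos.
have HQP : forall A, in_supp P A -> 0 < P A.
  by move=> A; rewrite /in_supp /Rltb; case: Rlt_dec.
pose r := fun i : 'I_m => fun A A' : 'M['F_2]_(m, n) => prefix_eq i A A'.
eapply Rle_trans; first refine (@Pr_le_or m n P P0 _ (fun A => [exists i : 'I_m, in_supp P A && Rltb (p_i P A i) c])
   (fun A => [exists i : 'I_m, (in_supp P A && ~~ rare P tau A) &&
      Rltb (condPr P (fun A' => B A' == B A) (prefix_eq i A)) delta]) _).
  move=> A /andP [HS]; rewrite /bad.
  case Hr: (rare P tau A) => /= Hb.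
    move: Hr => /existsP [i Hi]; apply/orP; left; apply/existsP; exists i; by rewrite HS.
  move: Hb => /existsP [i Hi]; apply/orP; right; apply/existsP; exists i; by rewrite HS Hi.
apply: Rplus_le_compat.
  eapply Rle_trans; first exact: (@Pr_exists m n P P0 (fun i A => in_supp P A && Rltb (p_i P A i) c)).
  rewrite -sumR_const_ord; apply: sumR_le => i _.
  have Hk := @key _ _ P (r i) (fun A => row i A) P0 (@pfx_refl m n i) (@pfx_sym m n i)
    (@pfx_trans m n i) (in_supp P) (enum (@predT 'rV['F_2]_n)) c Hc.
  have Hk' := Hk HQP (fun A _ => ltac:(by rewrite mem_enum)).
  eapply Rle_trans; first exact: Hk'.
  rewrite P1 -cardE card_mx card_Fp // mul1n INR_expn2 -Rpower_pow; last lra.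
  rewrite Rmult_1_r /c -Rpower_plus; right; congr Rpower; ring.
eapply Rle_trans; first exact: (@Pr_exists m n P P0 (fun i A => (in_supp P A && ~~ rare P tau A) && Rltb (condPr P (fun A' => B A' == B A) (prefix_eq i A)) delta)).
rewrite Rmult_assoc -sumR_const_ord; apply: sumR_le => i _.
pose Sg := [pred s : {set 'I_m} | Rleb (INR #|s|) (eta * INR m)].
have HQg : forall A, in_supp P A && ~~ rare P tau A -> B A \in map Some (enum Sg).
  move=> A /andP [HS HnR].
  have [_ H2] := HB A HS; have [S [HBS [HS' _]]] := H2 HnR.
  rewrite HBS; apply: map_f; rewrite mem_enum /Sg inE /Rleb; by case: Rle_dec.
have Hk := @key _ _ P (r i) B P0 (@pfx_refl m n i) (@pfx_sym m n i) (@pfx_trans m n i)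
  (fun A => in_supp P A && ~~ rare P tau A) (map Some (enum Sg)) delta Hd
  (fun A H => HQP A (proj1 (andP H))) HQg.
eapply Rle_trans; first exact: Hk.
rewrite P1 size_map -cardE Rmult_1_r.
apply: Rmult_le_compat_l; first lra.
apply: count_bound; lra.
Qed.
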